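(* Let $p\in[1,2]$ and $p^*=\frac{p}{p-1}$ ($p^*=\infty$ if $p=1$). Then for all $n\in\mathbb{N}$ and all real $a_1,\dots,a_n$, \[ \left(\sum_{j=1}^n|a_j|^2\right)^{1/2}\le D_{p^*,\infty}\left(\int_0^1\left|\sum_{j=1}^n a_jr_j(t)\right|^p dt\right)^{1/p}; \] consequently $\mathrm{A}_p\le D_{p^*,\infty}$.
   Context: Scalars are real. $X_q=\ell_q$ for $1\le q<\infty$, $X_\infty=c_0$, $(e_k)$ canonical unit vectors, $\|T\|$ the sup of $|T(x,y)|$ over unit balls. Rademacher functions: $r_j(t)=\operatorname{sign}(\sin(2^j\pi t))$ on $[0,1]$. For $0<r<\infty$, $\mathrm{A}_r$ is the optimal constant in the Khintchine inequality $\left(\sum_{j=1}^n|a_j|^2\right)^{1/2}\le \mathrm{A}_r\left(\int_0^1|\sum_{j=1}^n a_jr_j(t)|^rdt\right)^{1/r}$ (for all $n$ and real $a_j$). For $q\in[2,\infty]$, $D_{q,\infty}$ denotes the optimal constant $D$ such that $\left(\sum_{j}\left(\sum_{i}|T(e_i,e_j)|^{\frac{q}{q-1}}\right)^{2\frac{q-1}{q}}\right)^{1/2}\le D\|T\|$ for all continuous bilinear $T:X_q\times X_\infty\to\mathbb{R}$ (exponent $q/(q-1)$ read as $1$ when $q=\infty$). *)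

(* Defs.v *)
From Stdlib Require Import Reals.
Open Scope R_scope.

(* Real power for nonnegative bases, with 0^y = 0 (y > 0 in all uses). *)
Definition rpow (x y : R) : R := if Rle_dec x 0 then 0 else Rpower x y.

Definition sgn (x : R) : R :=
  if Rlt_dec 0 x then 1 else if Rlt_dec x 0 then -1 else 0.

Definition rademacher (j : nat) (t : R) : R := sgn (sin (2 ^ j * PI * t)).

Fixpoint sum1 (n : nat) (f : nat -> R) : R :=
  match n with O => 0 | S m => sum1 m f + f (S m) end.

Definition rad_integrand (p : R) (n : nat) (a : nat -> R) (t : R) : R :=
  rpow (Rabs (sum1 n (fun j => a j * rademacher j t))) p.

Definition khintchine_valid (r C : R) : Prop :=
  forall (n : nat) (a : nat -> R)
         (pr : Riemann_integrable (rad_integrand r n a) 0 1),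
    sqrt (sum1 n (fun j => Rabs (a j) ^ 2)) <= C * rpow (RiemannInt pr) (/ r).

Definition is_glb (P : R -> Prop) (c : R) : Prop :=
  (forall d, P d -> c <= d) /\ (forall c', (forall d, P d -> c' <= d) -> c' <= c).

(* exponent q in [2, infinity]: Some q for finite q, None for infinity *)
Definition ext_exp := option R.

(* X_q = l_q (q finite) or c_0 (q = infinity), as real sequences *)
Definition in_X (q : ext_exp) (x : nat -> R) : Prop :=
  match q with
  | Some q => exists S, infinite_sum (fun k => rpow (Rabs (x k)) q) S
  | None => Un_cv x 0
  end.

Definition in_ball (q : ext_exp) (x : nat -> R) : Prop :=
  match q with
  | Some q => exists S, infinite_sum (fun k => rpow (Rabs (x k)) q) S /\ S <= 1
  | None => Un_cv x 0 /\ forall k, Rabs (x k) <= 1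
  end.

Definition vadd (x y : nat -> R) : nat -> R := fun k => x k + y k.
Definition vscal (c : R) (x : nat -> R) : nat -> R := fun k => c * x k.

Definition e_ (k : nat) : nat -> R := fun i => if Nat.eq_dec i k then 1 else 0.

Definition bilinear (q : ext_exp) (T : (nat -> R) -> (nat -> R) -> R) : Prop :=
  (forall x x' y, in_X q x -> in_X q x' -> in_X None y ->
     T (vadd x x') y = T x y + T x' y) /\
  (forall c x y, in_X q x -> in_X None y -> T (vscal c x) y = c * T x y) /\
  (forall x y y', in_X q x -> in_X None y -> in_X None y' ->
     T x (vadd y y') = T x y + T x y') /\
  (forall c x y, in_X q x -> in_X None y -> T x (vscal c y) = c * T x y).

(* continuity of a bilinear form = boundedness on the product of unit balls *)
Definition bounded_on_balls (q : ext_exp) (T : (nat -> R) -> (nat -> R) -> R)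
  (B : R) : Prop :=
  forall x y, in_ball q x -> in_ball None y -> Rabs (T x y) <= B.

Definition continuous_bilinear (q : ext_exp) T : Prop :=
  bilinear q T /\ exists B, bounded_on_balls q T B.

Definition conj_exp (q : ext_exp) : R :=
  match q with Some q => q / (q - 1) | None => 1 end.

(* D is a valid constant: for all continuous bilinear T,
   (sum_j (sum_i |T(e_i,e_j)|^{q*})^{2/q*})^{1/2} <= D ||T||.
   The (possibly infinite) sums of nonnegative terms are bounded via all their
   partial sums, and "<= D ||T||" via all upper bounds B of |T| on the balls. *)
Definition D_valid (q : ext_exp) (D : R) : Prop :=
  forall T, continuous_bilinear q T ->
  forall B, bounded_on_balls q T B ->
  forall M N : nat,
    sqrt (sum_f_R0 (fun j =>
            rpow (sum_f_R0 (fun i => rpow (Rabs (T (e_ i) (e_ j))) (conj_exp q)) M)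
                 (2 / conj_exp q)) N)
    <= D * B.

Definition pstar (p : R) : ext_exp :=
  if Req_dec_T p 1 then None else Some (p / (p - 1)).

(* Main.v *)
Require Import Defs.
From Stdlib Require Import Reals Lra Lia.
From Coquelicot Require Import Coquelicot.
Open Scope R_scope.

Fixpoint fs (K : nat) (f : nat -> R) : R :=
  match K with O => 0 | S m => fs m f + f m end.

Lemma fs_ext K f g : (forall k, (k < K)%nat -> f k = g k) -> fs K f = fs K g.
Proof. induction K; simpl; intros H; auto. rewrite IHK, H; auto. Qed.
Lemma fs_plus K f g : fs K (fun k => f k + g k) = fs K f + fs K g.
Proof. induction K; simpl; [lra|]. rewrite IHK; lra. Qed.
Lemma fs_scal K c f : fs K (fun k => c * f k) = c * fs K f.
Proof. induction K; simpl; [lra|]. rewrite IHK; lra. Qed.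
Lemma fs_le K f g : (forall k, (k < K)%nat -> f k <= g k) -> fs K f <= fs K g.
Proof. induction K; simpl; intros H; [lra|]. apply Rplus_le_compat; auto. Qed.
Lemma fs_abs K f : Rabs (fs K f) <= fs K (fun k => Rabs (f k)).
Proof. induction K; simpl. rewrite Rabs_R0; lra.
  eapply Rle_trans; [apply Rabs_triang|]. lra. Qed.
Lemma fs_ge0 K f : (forall k, (k < K)%nat -> 0 <= f k) -> 0 <= fs K f.
Proof. intros H. replace 0 with (fs K (fun _ => 0)). apply fs_le; auto.
  induction K; simpl; auto. rewrite IHK; [lra| auto]. Qed.
Lemma fs_sum_f_R0 M f : fs (S M) f = sum_f_R0 f M.
Proof. induction M; simpl. lra. simpl in IHM. rewrite <- IHM. lra. Qed.
Lemma fs_double K f : fs (2 * K) f = fs K (fun k => f (2 * k)%nat + f (S (2 * k))).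
Proof. induction K. reflexivity.
  replace (2 * S K)%nat with (S (S (2 * K))) by lia. change (fs (S (S (2*K))) f) with (fs (2*K) f + f (2*K)%nat + f (S (2*K))).
  rewrite IHK. change (fs (S K) ?g) with (fs K g + g K). cbv beta. lra. Qed.
Lemma fs_zero0 K f : (forall k, (k < K)%nat -> 0 <= f k) -> fs K f <= 0 ->
  forall k, (k < K)%nat -> f k = 0.
Proof. induction K; simpl; intros H Hs k Hk. lia.
  assert (0 <= fs K f) by (apply fs_ge0; auto).
  assert (0 <= f K) by auto.
  destruct (Nat.eq_dec k K). subst; lra. apply IHK; auto. lra. lia. Qed.
Lemma fs_0 K : fs K (fun _ => 0) = 0.
Proof. induction K; simpl; auto. rewrite IHK; lra. Qed.
Lemma fs_delta K i g : (i < K)%nat -> fs K (fun k => e_ i k * g k) = g i.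
Proof. induction K; intros H. lia. simpl. unfold e_ at 2.
  destruct (Nat.eq_dec K i). subst.
  replace (fs i (fun k => e_ i k * g k)) with (fs i (fun _ => 0)).
  rewrite fs_0. lra.
  apply fs_ext. intros k Hk. unfold e_. destruct (Nat.eq_dec k i); [lia| lra].
  rewrite IHK by lia. lra. Qed.

Lemma sum1_ext n f g : (forall j, (1 <= j <= n)%nat -> f j = g j) -> sum1 n f = sum1 n g.
Proof. induction n; simpl; intros H; auto. rewrite IHn, H; auto; try lia; intros; apply H; lia. Qed.
Lemma sum1_plus n f g : sum1 n (fun j => f j + g j) = sum1 n f + sum1 n g.
Proof. induction n; simpl; [lra|]. rewrite IHn; lra. Qed.
Lemma sum1_scal n c f : sum1 n (fun j => c * f j) = c * sum1 n f.
Proof. induction n; simpl; [lra|]. rewrite IHn; lra. Qed.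
Lemma sum1_delta n i g : (1 <= i <= n)%nat -> sum1 n (fun j => e_ i j * g j) = g i.
Proof. induction n; simpl; intros H. lia.
  unfold e_ at 2. destruct (Nat.eq_dec (S n) i).
  - subst. replace (sum1 n (fun j => e_ (S n) j * g j)) with (sum1 n (fun _ => 0)).
    clear. induction n; simpl; lra.
    apply sum1_ext. intros j Hj. unfold e_. destruct (Nat.eq_dec j (S n)); [lia|lra].
  - rewrite IHn by lia. lra.
Qed.
Lemma sum1_delta0 n g : sum1 n (fun j => e_ 0 j * g j) = 0.
Proof. induction n; simpl. lra. rewrite IHn. unfold e_. destruct (Nat.eq_dec (S n) 0); [lia|lra]. Qed.
Lemma sum1_sum_f_R0 n f : sum_f_R0 f n = f O + sum1 n f.
Proof. induction n; simpl; [lra|]. rewrite IHn. lra. Qed.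

Lemma rpow_ge0 x y : 0 <= rpow x y.
Proof. unfold rpow; destruct Rle_dec; [lra|]. left; unfold Rpower; apply exp_pos. Qed.
Lemma rpow_pos x y : 0 < x -> rpow x y = Rpower x y.
Proof. intros; unfold rpow; destruct Rle_dec; [lra|auto]. Qed.
Lemma rpow_gt0 x y : 0 < x -> 0 < rpow x y.
Proof. intros; rewrite rpow_pos by auto; unfold Rpower; apply exp_pos. Qed.
Lemma rpow_0 y : rpow 0 y = 0.
Proof. unfold rpow; destruct Rle_dec; lra. Qed.
Lemma rpow_le x y e : 0 <= e -> 0 <= x <= y -> rpow x e <= rpow y e.
Proof. intros He [H1 H2]. destruct (Req_dec x 0). subst; rewrite rpow_0; apply rpow_ge0.
  rewrite !rpow_pos by lra. apply Rle_Rpower_l; lra. Qed.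
Lemma rpow_1 x : 0 <= x -> rpow x 1 = x.
Proof. intros H. destruct (Req_dec x 0). subst; apply rpow_0. rewrite rpow_pos by lra. apply Rpower_1; lra. Qed.
Lemma rpow_rpow x y z : 0 <= x -> rpow (rpow x y) z = rpow x (y*z).
Proof. intros H. destruct (Req_dec x 0). subst; rewrite !rpow_0; auto.
  rewrite (rpow_pos x y) by lra. rewrite rpow_pos. rewrite rpow_pos by lra. apply Rpower_mult.
  rewrite <- rpow_pos by lra. apply rpow_gt0; lra. Qed.
Lemma rpow_mul a b y : 0 <= a -> 0 <= b -> rpow (a*b) y = rpow a y * rpow b y.
Proof. intros Ha Hb. destruct (Req_dec a 0). subst; rewrite Rmult_0_l, !rpow_0; lra.
  destruct (Req_dec b 0). subst; rewrite Rmult_0_r, !rpow_0; lra.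
  rewrite !rpow_pos by (try apply Rmult_lt_0_compat; lra). rewrite Rpower_mult_distr; lra. Qed.
Lemma rpow_eq0 x y : 0 <= x -> rpow x y = 0 -> x = 0.
Proof. intros H1 H2. destruct (Req_dec x 0); auto. assert (0 < rpow x y) by (apply rpow_gt0; lra). lra. Qed.
Lemma rpow_plus x y z : 0 < x -> rpow x (y+z) = rpow x y * rpow x z.
Proof. intros. rewrite !rpow_pos by lra. apply Rpower_plus. Qed.

Lemma exp_conv l u v : 0 <= l <= 1 -> exp (l*u + (1-l)*v) <= l * exp u + (1-l) * exp v.
Proof. intros Hl. set (m := l*u + (1-l)*v).
  assert (E1 : exp u = exp m * exp (u - m)) by (rewrite <- exp_plus; f_equal; ring).
  assert (E2 : exp v = exp m * exp (v - m)) by (rewrite <- exp_plus; f_equal; ring).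
  pose proof (exp_ineq1_le (u-m)). pose proof (exp_ineq1_le (v-m)). pose proof (exp_pos m).
  rewrite E1, E2.
  assert (exp m * (1 + (u-m)) <= exp m * exp (u-m)) by (apply Rmult_le_compat_l; lra).
  assert (exp m * (1 + (v-m)) <= exp m * exp (v-m)) by (apply Rmult_le_compat_l; lra).
  assert (l * (exp m * (1 + (u-m))) + (1-l)*(exp m * (1 + (v-m))) = exp m) by (unfold m; ring).
  nra. Qed.

Lemma young p a b : 1 < p -> 0 <= a -> 0 <= b ->
  a * b <= rpow a (p/(p-1)) / (p/(p-1)) + rpow b p / p.
Proof. intros Hp Ha Hb. set (q := p/(p-1)).
  assert (Hq : 1 < q) by (unfold q; apply (Rmult_lt_reg_r (p-1)); [lra|]; field_simplify; lra).
  pose proof (rpow_ge0 a q). pose proof (rpow_ge0 b p).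
  assert (0 <= rpow a q / q) by (unfold Rdiv; apply Rmult_le_pos; [lra| left; apply Rinv_0_lt_compat; lra]).
  assert (0 <= rpow b p / p) by (unfold Rdiv; apply Rmult_le_pos; [lra| left; apply Rinv_0_lt_compat; lra]).
  destruct (Req_dec a 0). subst; lra. destruct (Req_dec b 0). subst; lra.
  rewrite !rpow_pos by lra. unfold Rpower.
  assert (Hl : /q + /p = 1) by (unfold q; field; lra).
  replace (a*b) with (exp (/q * (q * ln a) + (1 - /q) * (p * ln b))).
  replace (exp (q * ln a) / q + exp (p * ln b) / p) with (/q * exp (q * ln a) + (1 - /q) * exp (p * ln b)).
  apply exp_conv. assert (0 < /q) by (apply Rinv_0_lt_compat; lra). assert (/q < 1) by (rewrite <- Rinv_1; apply Rinv_lt_contravar; lra). lra.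
  replace (1 - /q) with (/p) by lra. field; lra.
  replace (1 - /q) with (/p) by lra.
  replace (/ q * (q * ln a) + / p * (p * ln b)) with (ln a + ln b) by (field; lra).
  rewrite exp_plus, !exp_ln by lra. auto. Qed.

Lemma pow_conv p A B l : 1 <= p -> 0 <= A -> 0 <= B -> 0 <= l <= 1 ->
  rpow (l*A + (1-l)*B) p <= l * rpow A p + (1-l) * rpow B p.
Proof. intros Hp HA HB Hl. destruct (Req_dec p 1).
  subst. rewrite !rpow_1; nra.
  set (s := l*A + (1-l)*B). assert (Hs : 0 <= s) by (unfold s; nra).
  pose proof (rpow_ge0 A p). pose proof (rpow_ge0 B p).
  destruct (Req_dec s 0) as [Hs0|Hs0]. rewrite Hs0, rpow_0. nra.
  assert (Es : rpow s p = s * rpow s (p-1)).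
  { replace p with (1 + (p-1)) at 1 by ring. rewrite rpow_plus by lra. rewrite rpow_1 by lra. auto. }
  set (a := rpow s (p-1)). assert (Ha : 0 <= a) by apply rpow_ge0.
  assert (Eaq : rpow a (p/(p-1)) = rpow s p).
  { unfold a. rewrite rpow_rpow by lra. f_equal. field. lra. }
  pose proof (young p a A ltac:(lra) Ha HA) as Y1.
  pose proof (young p a B ltac:(lra) Ha HB) as Y2. rewrite Eaq in Y1, Y2.
  assert (rpow s p = l * (a * A) + (1-l) * (a * B)).
  { rewrite Es. fold a. unfold s. ring. }
  assert (HH : rpow s p <= l * (rpow s p / (p/(p-1)) + rpow A p / p) + (1-l) * (rpow s p / (p/(p-1)) + rpow B p / p)) by nra.
  replace (l * (rpow s p / (p/(p-1)) + rpow A p / p) + (1-l) * (rpow s p / (p/(p-1)) + rpow B p / p))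
    with (rpow s p * (1 - /p) + (l * rpow A p + (1-l) * rpow B p) / p) in HH by (field; lra).
  assert (rpow s p / p <= (l * rpow A p + (1 - l) * rpow B p) / p) by lra.
  apply Rmult_le_reg_r with (/p). apply Rinv_0_lt_compat; lra. lra. Qed.

Definition psi (p v : R) := rpow (Rabs v) p.
Definition convex (f : R -> R) := forall u v l, 0 <= l <= 1 -> f (l*u + (1-l)*v) <= l * f u + (1-l) * f v.

Lemma psi_convex p : 1 <= p -> convex (psi p).
Proof. intros Hp u v l Hl. unfold psi. eapply Rle_trans.
  apply rpow_le. lra. split. apply Rabs_pos.
  eapply Rle_trans. apply Rabs_triang. rewrite !Rabs_mult. rewrite (Rabs_right l), (Rabs_right (1-l)) by lra. apply Rle_refl.
  apply pow_conv; auto; apply Rabs_pos. Qed.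

Fixpoint Wsum (f : R -> R) (a y : nat -> R) (n : nat) (c : R) : R :=
  match n with
  | O => f c
  | S m => Wsum f a y m (c + a (S m) * y (S m)) + Wsum f a y m (c - a (S m) * y (S m))
  end.

Definition eps (n k j : nat) : R := if Nat.even (k / 2^(n-j)) then 1 else -1.

Lemma eps_split n k b j : (b < 2)%nat -> (1 <= j <= n)%nat -> eps (S n) (2*k+b) j = eps n k j.
Proof. intros Hb Hj. unfold eps. replace (S n - j)%nat with (S (n - j)) by lia.
  rewrite Nat.pow_succ_r'. rewrite <- Nat.Div0.div_div.
  replace ((2*k+b)/2)%nat with k. reflexivity.
  apply Nat.div_unique with b; lia. Qed.

Lemma eps_last0 n k : eps (S n) (2*k) (S n) = 1.
Proof. unfold eps. rewrite Nat.sub_diag, Nat.pow_0_r, Nat.div_1_r. rewrite Nat.even_mul. reflexivity. Qed.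
Lemma eps_last1 n k : eps (S n) (S (2*k)) (S n) = -1.
Proof. unfold eps. rewrite Nat.sub_diag, Nat.pow_0_r, Nat.div_1_r. rewrite Nat.even_succ, Nat.odd_mul. reflexivity. Qed.

Lemma eps_abs n k j : Rabs (eps n k j) = 1.
Proof. unfold eps. destruct Nat.even; [apply Rabs_R1|]. rewrite Rabs_left; lra. Qed.

Lemma Wsum_fs f a y n c :
  fs (2^n) (fun k => f (c + sum1 n (fun j => a j * y j * eps n k j))) = Wsum f a y n c.
Proof. revert c; induction n; intros c.
  simpl. replace (c + 0) with c by ring. ring.
  rewrite Nat.pow_succ_r', fs_double, fs_plus. simpl Wsum. rewrite <- !IHn.
  f_equal; apply fs_ext; intros k Hk; f_equal; cbn [sum1].
  - rewrite eps_last0. replace (sum1 n (fun j => a j * y j * eps (S n) (2 * k) j))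
      with (sum1 n (fun j => a j * y j * eps n k j)). ring.
    apply sum1_ext; intros j Hj. replace (2*k)%nat with (2*k+0)%nat by lia. rewrite eps_split; auto; lia.
  - rewrite eps_last1. replace (sum1 n (fun j => a j * y j * eps (S n) (S (2 * k)) j))
      with (sum1 n (fun j => a j * y j * eps n k j)). ring.
    apply sum1_ext; intros j Hj. replace (S (2*k))%nat with (2*k+1)%nat by lia. rewrite eps_split; auto; lia.
Qed.

Lemma Wsum_convex f a y n : convex f -> convex (Wsum f a y n).
Proof. intros Hf. induction n; simpl; intros u v l Hl. apply Hf; auto.
  replace (l * u + (1 - l) * v + a (S n) * y (S n)) with (l * (u + a (S n) * y (S n)) + (1-l) * (v + a (S n) * y (S n))) by ring.
  replace (l * u + (1 - l) * v - a (S n) * y (S n)) with (l * (u - a (S n) * y (S n)) + (1-l) * (v - a (S n) * y (S n))) by ring.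
  pose proof (IHn (u + a (S n) * y (S n)) (v + a (S n) * y (S n)) l Hl).
  pose proof (IHn (u - a (S n) * y (S n)) (v - a (S n) * y (S n)) l Hl). lra. Qed.

Lemma two_point g c b t : convex g -> Rabs t <= 1 -> g (c + b*t) + g (c - b*t) <= g (c + b) + g (c - b).
Proof. intros Hg Ht. assert (Ht2 : -1 <= t <= 1) by (unfold Rabs in Ht; destruct Rcase_abs in Ht; lra). set (l := (1+t)/2).
  assert (Hl : 0 <= l <= 1) by (unfold l; lra).
  replace (c + b*t) with (l * (c+b) + (1-l)*(c-b)) by (unfold l; field).
  replace (c - b*t) with (l * (c-b) + (1-l)*(c+b)) by (unfold l; field).
  pose proof (Hg (c+b) (c-b) l Hl). pose proof (Hg (c-b) (c+b) l Hl). lra. Qed.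

Lemma Wsum_le f a y n c : convex f -> (forall j, Rabs (y j) <= 1) ->
  Wsum f a y n c <= Wsum f a (fun _ => 1) n c.
Proof. intros Hf Hy. revert c; induction n; intros c; simpl. lra.
  eapply Rle_trans. apply Rplus_le_compat; apply IHn.
  rewrite !Rmult_1_r.
  rewrite !(Rmult_comm (a (S n)) (y (S n))).
  rewrite <- !(Rmult_comm (a (S n)) (y (S n))).
  apply (two_point (Wsum f a (fun _ => 1) n) c (a (S n)) (y (S n))).
  apply Wsum_convex; auto. auto. Qed.

Lemma sin_shift m x : sin (x + INR m * PI) = (if Nat.even m then 1 else -1) * sin x.
Proof. induction m. simpl. replace (x + 0 * PI) with x by ring. ring.
  rewrite S_INR. replace (x + (INR m + 1) * PI) with ((x + INR m * PI) + PI) by ring.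
  rewrite neg_sin, IHm. rewrite Nat.even_succ, <- Nat.negb_even. destruct (Nat.even m); simpl; ring. Qed.

Lemma sgn_sin m s : INR m < s < INR m + 1 -> sgn (sin (PI * s)) = if Nat.even m then 1 else -1.
Proof. intros Hs. replace (PI * s) with (PI * (s - INR m) + INR m * PI) by ring.
  rewrite sin_shift. assert (0 < sin (PI * (s - INR m))).
  { apply sin_gt_0. apply Rmult_lt_0_compat; [apply PI_RGT_0|lra].
    pose proof PI_RGT_0. replace PI with (PI * 1) at 2 by ring. apply Rmult_lt_compat_l; lra. }
  unfold sgn. destruct (Nat.even m);
  repeat match goal with |- context [Rlt_dec ?a ?b] => destruct (Rlt_dec a b) end; lra. Qed.

Lemma INR_pow2 m : INR (2^m) = 2^m.
Proof. rewrite pow_INR. replace (INR 2) with 2 by (simpl; ring). reflexivity. Qed.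

Lemma rad_const n k t j : INR k / 2^n < t < INR (S k) / 2^n -> (1 <= j <= n)%nat ->
  rademacher j t = eps n k j.
Proof. intros [H1 H2] Hj. unfold rademacher, eps.
  set (P := (2^(n-j))%nat). set (m := (k / P)%nat).
  assert (HP : (P <> 0)%nat) by (unfold P; apply Nat.pow_nonzero; lia).
  assert (Hm1 : (P * m <= k)%nat) by (unfold m; apply Nat.Div0.mul_div_le).
  assert (Hm2 : (k < P * S m)%nat).
  { unfold m. pose proof (Nat.div_mod k P HP). pose proof (Nat.mod_upper_bound k P HP). lia. }
  assert (Hm1' : INR P * INR m <= INR k) by (rewrite <- mult_INR; apply le_INR; auto).
  assert (Hm2' : INR k + 1 <= INR P * (INR m + 1)) by (replace (INR k + 1) with (INR (S k)) by (rewrite S_INR; ring); replace (INR P * (INR m + 1)) with (INR (P * S m)) by (rewrite mult_INR, S_INR; ring); apply le_INR; lia).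
  assert (E : (2:R)^n = 2^j * INR P) by (unfold P; rewrite INR_pow2, <- pow_add; f_equal; lia).
  assert (HPp : 0 < INR P) by (apply lt_0_INR; lia).
  assert (Hj2 : 0 < 2^j) by (apply pow_lt; lra).
  rewrite E in H1, H2. rewrite S_INR in H2.
  apply Rmult_lt_compat_r with (r := 2^j * INR P) in H1; [|nra].
  apply Rmult_lt_compat_r with (r := 2^j * INR P) in H2; [|nra].
  replace (INR k / (2 ^ j * INR P) * (2 ^ j * INR P)) with (INR k) in H1 by (field; lra).
  replace ((INR k + 1) / (2 ^ j * INR P) * (2 ^ j * INR P)) with (INR k + 1) in H2 by (field; lra).
  replace (2 ^ j * PI * t) with (PI * (2^j * t)) by ring.
  apply sgn_sin. split.
  - apply Rmult_lt_reg_l with (INR P); auto. nra.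
  - apply Rmult_lt_reg_l with (INR P); auto. nra.
Qed.

Definition val (p : R) (n : nat) (a : nat -> R) (k : nat) : R :=
  psi p (sum1 n (fun j => a j * eps n k j)).

Lemma rad_piece p n a k :
  is_RInt (rad_integrand p n a) (INR k / 2^n) (INR (S k) / 2^n) (/2^n * val p n a k).
Proof. assert (H2 : 0 < 2^n) by (apply pow_lt; lra).
  assert (Hle : INR k / 2^n <= INR (S k) / 2^n).
  { unfold Rdiv. apply Rmult_le_compat_r. left; apply Rinv_0_lt_compat; auto. apply le_INR; lia. }
  eapply is_RInt_ext.
  2: { replace (/2^n * val p n a k) with (scal (INR (S k) / 2^n - INR k / 2^n) (val p n a k)).
       apply (is_RInt_const (V:=R_NormedModule)). rewrite S_INR. unfold scal; simpl; unfold mult; simpl. field. lra. }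
  intros t Ht. rewrite Rmin_left, Rmax_right in Ht by auto.
  unfold rad_integrand, val, psi. f_equal. f_equal. apply sum1_ext. intros j Hj.
  rewrite (rad_const n k t j); auto. Qed.

Lemma rad_upto p n a K :
  is_RInt (rad_integrand p n a) 0 (INR K / 2^n) (fs K (fun k => /2^n * val p n a k)).
Proof. induction K. simpl. replace (0 / 2^n) with 0 by (field; apply pow_nonzero; lra).
  apply (is_RInt_point (rad_integrand p n a) 0).
  simpl fs. apply (is_RInt_Chasles _ _ _ _ _ _ IHK (rad_piece p n a K)). Qed.

Lemma rad_int p n a (pr : Riemann_integrable (rad_integrand p n a) 0 1) :
  RiemannInt pr = fs (2^n) (fun k => /2^n * val p n a k).
Proof. rewrite <- RInt_Reals. apply is_RInt_unique.
  replace 1 with (INR (2^n) / 2^n). apply rad_upto.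
  rewrite INR_pow2. field. apply pow_nonzero; lra. Qed.

Definition cc p n := rpow (/2^n) (/p).
Definition Tf p n a (x y : nat -> R) :=
  fs (2^n) (fun k => x k * (cc p n * sum1 n (fun j => a j * y j * eps n k j))).
Definition Ival p n a := fs (2^n) (fun k => /2^n * val p n a k).

Lemma pow2_pos n : 0 < 2^n. Proof. apply pow_lt; lra. Qed.

Lemma cc_pow p n : 0 < p -> rpow (cc p n) p = /2^n.
Proof. intros Hp. unfold cc. rewrite rpow_rpow. replace (/p * p) with 1 by (field; lra).
  apply rpow_1. left; apply Rinv_0_lt_compat, pow2_pos.
  left; apply Rinv_0_lt_compat, pow2_pos. Qed.

Lemma cc_ge0 p n : 0 <= cc p n.
Proof. apply rpow_ge0. Qed.

Lemma fs_const K v : fs K (fun _ => v) = INR K * v.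
Proof. induction K; simpl fs. simpl; ring. rewrite IHK, S_INR; ring. Qed.

Lemma Ival_ge0 p n a : 0 <= Ival p n a.
Proof. apply fs_ge0. intros k _. apply Rmult_le_pos. left; apply Rinv_0_lt_compat, pow2_pos.
  apply rpow_ge0. Qed.

Lemma w_bound p n a y : 1 <= p -> (forall j, Rabs (y j) <= 1) ->
  fs (2^n) (fun k => rpow (Rabs (cc p n * sum1 n (fun j => a j * y j * eps n k j))) p) <= Ival p n a.
Proof. intros Hp Hy.
  rewrite (fs_ext _ _ (fun k => /2^n * psi p (0 + sum1 n (fun j => a j * y j * eps n k j)))).
  2: { intros k _. rewrite Rabs_mult, (Rabs_right (cc p n)) by (apply Rle_ge, cc_ge0).
       rewrite rpow_mul by (try apply cc_ge0; apply Rabs_pos). rewrite cc_pow by lra.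
       unfold psi. rewrite Rplus_0_l. reflexivity. }
  rewrite fs_scal, Wsum_fs. unfold Ival. rewrite fs_scal.
  apply Rmult_le_compat_l. left; apply Rinv_0_lt_compat, pow2_pos.
  eapply Rle_trans. apply Wsum_le; auto. apply psi_convex; auto.
  rewrite <- Wsum_fs. apply Req_le. apply fs_ext. intros k _. unfold val. f_equal.
  rewrite Rplus_0_l. apply sum1_ext. intros; ring. Qed.

Lemma Tf_bilinear q p n a : bilinear q (Tf p n a).
Proof. unfold bilinear, Tf, vadd, vscal. repeat split; intros; cbv beta.
  - rewrite <- fs_plus. apply fs_ext; intros; ring.
  - rewrite <- fs_scal. apply fs_ext; intros; ring.
  - rewrite <- fs_plus. apply fs_ext; intros k _.
    rewrite <- Rmult_plus_distr_l, <- Rmult_plus_distr_l, <- sum1_plus. f_equal. f_equal.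
    apply sum1_ext; intros; ring.
  - rewrite <- fs_scal. apply fs_ext; intros k _.
    replace (sum1 n (fun j => a j * (c * y j) * eps n k j)) with (c * sum1 n (fun j => a j * y j * eps n k j)).
    ring. rewrite <- sum1_scal. apply sum1_ext; intros; ring. Qed.

Lemma rpow_2 x : 0 <= x -> rpow x 2 = x^2.
Proof. intros H. destruct (Req_dec x 0). subst. rewrite rpow_0. simpl; ring.
  rewrite rpow_pos by lra. replace 2 with (INR 2) by (simpl; ring). apply Rpower_pow; lra. Qed.

Lemma Tf_e p n a i j : (i < 2^n)%nat ->
  Tf p n a (e_ i) (e_ j) = cc p n * sum1 n (fun j' => e_ j j' * (a j' * eps n i j')).
Proof. intros Hi. unfold Tf. rewrite (fs_delta _ _ (fun k => cc p n * sum1 n (fun j' => a j' * e_ j j' * eps n k j'))) by auto.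
  f_equal. apply sum1_ext; intros; ring. Qed.

Lemma inner_j p n a j : 0 < p -> (1 <= j <= n)%nat ->
  fs (2^n) (fun i => rpow (Rabs (Tf p n a (e_ i) (e_ j))) p) = rpow (Rabs (a j)) p.
Proof. intros Hp Hj. rewrite (fs_ext _ _ (fun _ => /2^n * rpow (Rabs (a j)) p)).
  rewrite fs_const, INR_pow2. field. apply pow_nonzero; lra.
  intros i Hi. rewrite Tf_e by auto. rewrite sum1_delta by auto.
  rewrite !Rabs_mult, eps_abs, Rmult_1_r, (Rabs_right (cc p n)) by (apply Rle_ge, cc_ge0).
  rewrite rpow_mul by (try apply cc_ge0; apply Rabs_pos). rewrite cc_pow; auto. Qed.

Lemma inner_0 p n a : fs (2^n) (fun i => rpow (Rabs (Tf p n a (e_ i) (e_ 0))) p) = 0.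
Proof. rewrite (fs_ext _ _ (fun _ => 0)). apply fs_0.
  intros i Hi. rewrite Tf_e by auto. rewrite sum1_delta0, Rmult_0_r, Rabs_R0. apply rpow_0. Qed.

Lemma lhs_eq p n a : 0 < p ->
  sum_f_R0 (fun j => rpow (sum_f_R0 (fun i => rpow (Rabs (Tf p n a (e_ i) (e_ j))) p) (2^n - 1)) (2/p)) n
  = sum1 n (fun j => Rabs (a j) ^ 2).
Proof. intros Hp. assert (HK : S (2^n - 1) = (2^n)%nat) by (pose proof (Nat.pow_nonzero 2 n); lia).
  rewrite sum1_sum_f_R0. rewrite <- !fs_sum_f_R0, HK, inner_0, rpow_0, Rplus_0_l.
  apply sum1_ext. intros j Hj. rewrite <- fs_sum_f_R0, HK, inner_j by auto.
  rewrite rpow_rpow by apply Rabs_pos. replace (p * (2/p)) with 2 by (field; lra).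
  apply rpow_2, Rabs_pos. Qed.

Lemma partial_le f L K : (forall k, 0 <= f k) -> infinite_sum f L -> (1 <= K)%nat -> fs K f <= L.
Proof. intros Hf Hs HK. replace K with (S (K - 1)) by lia. rewrite fs_sum_f_R0.
  apply growing_ineq. unfold Un_growing. intros m. simpl. pose proof (Hf (S m)). lra.
  exact Hs. Qed.

Lemma rpow_one p : rpow 1 p = 1.
Proof. rewrite rpow_pos by lra. unfold Rpower. rewrite ln_1, Rmult_0_r. apply exp_0. Qed.

Lemma holder_step p K (x w : nat -> R) I : 1 < p ->
  fs K (fun k => rpow (Rabs (x k)) (p/(p-1))) <= 1 ->
  fs K (fun k => rpow (Rabs (w k)) p) <= I ->
  fs K (fun k => Rabs (x k) * Rabs (w k)) <= rpow I (/p).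
Proof. intros Hp HX HW. set (q := p/(p-1)) in *.
  assert (Hq : /q = 1 - /p) by (unfold q; field; lra).
  assert (Hq0 : 0 < /q) by (unfold q; apply Rinv_0_lt_compat; unfold Rdiv; apply Rmult_lt_0_compat; [lra|apply Rinv_0_lt_compat; lra]).
  assert (HW0 : 0 <= fs K (fun k => rpow (Rabs (w k)) p)) by (apply fs_ge0; intros; apply rpow_ge0).
  destruct (Req_dec I 0) as [HI|HI].
  - assert (Hz : forall k, (k < K)%nat -> w k = 0).
    { intros k Hk. pose proof (fs_zero0 K (fun k => rpow (Rabs (w k)) p)) as Z.
      assert (rpow (Rabs (w k)) p = 0). apply Z; auto. intros; apply rpow_ge0. lra.
      apply rpow_eq0 in H; [|apply Rabs_pos]. destruct (Req_dec (w k) 0); auto.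
      apply Rabs_no_R0 in H0. contradiction. }
    rewrite (fs_ext _ _ (fun _ => 0)). rewrite fs_0. apply rpow_ge0.
    intros k Hk. rewrite Hz by auto. rewrite Rabs_R0. ring.
  - assert (HIp : 0 < I) by lra. set (N := rpow I (/p)).
    assert (HN : 0 < N) by (apply rpow_gt0; auto).
    assert (HNp : rpow N p = I) by (unfold N; rewrite rpow_rpow by lra; replace (/p * p) with 1 by (field; lra); apply rpow_1; lra).
    assert (HNi : rpow (/N) p = /I).
    { rewrite <- HNp. apply (Rmult_eq_reg_r (rpow N p)). rewrite <- rpow_mul, Rinv_l, rpow_one, Rinv_l; auto.
      rewrite HNp; lra. lra. left; apply Rinv_0_lt_compat; lra. lra. rewrite HNp; lra. }
    eapply Rle_trans.
    apply (fs_le _ _ (fun k => N * /q * rpow (Rabs (x k)) q + N * /I * /p * rpow (Rabs (w k)) p)).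
    { intros k _. replace (Rabs (x k) * Rabs (w k)) with (N * (Rabs (x k) * (Rabs (w k) * /N))) by (field; lra).
      pose proof (young p (Rabs (x k)) (Rabs (w k) * /N) Hp (Rabs_pos _)
        ltac:(apply Rmult_le_pos; [apply Rabs_pos| left; apply Rinv_0_lt_compat; lra])) as Y.
      rewrite rpow_mul, HNi in Y by (try apply Rabs_pos; left; apply Rinv_0_lt_compat; lra).
      fold q in Y. apply Rmult_le_compat_l with (r := N) in Y; [|lra]. unfold Rdiv in Y. lra. }
    rewrite fs_plus, !fs_scal.
    assert (N * /q * fs K (fun k => rpow (Rabs (x k)) q) <= N * /q) by (rewrite <- (Rmult_1_r (N * /q)) at 2; apply Rmult_le_compat_l; nra).
    assert (N * / I * / p * fs K (fun k => rpow (Rabs (w k)) p) <= N * /I * /p * I).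
    { apply Rmult_le_compat_l; auto. apply Rmult_le_pos; [|left; apply Rinv_0_lt_compat; lra].
      apply Rmult_le_pos; [lra|left; apply Rinv_0_lt_compat; lra]. }
    replace (N * / I * / p * I) with (N * /p) in H0 by (field; lra).
    rewrite Hq in H |- *. nra.
Qed.

Lemma bound_balls p n a : 1 <= p -> bounded_on_balls (pstar p) (Tf p n a) (rpow (Ival p n a) (/p)).
Proof. intros Hp x y Hx [_ Hy].
  set (w := fun k => cc p n * sum1 n (fun j => a j * y j * eps n k j)).
  assert (HW := w_bound p n a y Hp Hy). fold w in HW.
  assert (HT : Rabs (Tf p n a x y) <= fs (2^n) (fun k => Rabs (x k) * Rabs (w k))).
  { unfold Tf. eapply Rle_trans. apply fs_abs. apply Req_le. apply fs_ext. intros; unfold w; apply Rabs_mult. }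
  eapply Rle_trans; [apply HT|]. clear HT.
  unfold pstar in Hx. destruct (Req_dec_T p 1) as [E|E].
  - destruct Hx as [_ Hx]. subst p. rewrite Rinv_1, rpow_1 by apply Ival_ge0.
    eapply Rle_trans; [|apply HW]. apply fs_le. intros k _. rewrite rpow_1 by apply Rabs_pos.
    pose proof (Rabs_pos (w k)). pose proof (Hx k). unfold w in H |- *. nra.
  - destruct Hx as [L [HL HL1]]. apply holder_step; auto. lra.
    eapply Rle_trans; [|apply HL1]. apply partial_le; auto. intros; apply rpow_ge0.
    pose proof (Nat.pow_nonzero 2 n). lia.
Qed.

Lemma cexp p : conj_exp (pstar p) = p.
Proof. unfold pstar. destruct (Req_dec_T p 1) as [E|E]. subst; reflexivity. simpl.
  assert (p - 1 <> 0) by (intros H; apply E; lra).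
  assert (p / (p-1) - 1 = / (p-1)) by (field; auto). rewrite H0. field. auto. Qed.

Theorem theorem2p4 (p : R) (hp1 : 1 <= p) (hp2 : p <= 2) (D : R)
  (hD : is_glb (D_valid (pstar p)) D) :
  (forall (n : nat) (a : nat -> R)
          (pr : Riemann_integrable (rad_integrand p n a) 0 1),
     sqrt (sum1 n (fun j => Rabs (a j) ^ 2)) <= D * rpow (RiemannInt pr) (/ p))
  /\ (forall A : R, is_glb (khintchine_valid p) A -> A <= D).
Proof.
  assert (P1 : forall (n : nat) (a : nat -> R)
          (pr : Riemann_integrable (rad_integrand p n a) 0 1),
     sqrt (sum1 n (fun j => Rabs (a j) ^ 2)) <= D * rpow (RiemannInt pr) (/ p)).
  { intros n a pr. rewrite rad_int. fold (Ival p n a).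
    set (S0 := sqrt (sum1 n (fun j => Rabs (a j) ^ 2))).
    set (N := rpow (Ival p n a) (/p)).
    assert (key : forall d, D_valid (pstar p) d -> S0 <= d * N).
    { intros d Hd. pose proof (bound_balls p n a hp1) as Hb.
      specialize (Hd (Tf p n a) (conj (Tf_bilinear _ p n a) (ex_intro _ N Hb)) N Hb (2^n - 1)%nat n).
      rewrite cexp, lhs_eq in Hd by lra. exact Hd. }
    destruct hD as [hlb hglb].
    assert (HN : 0 <= N) by apply rpow_ge0.
    destruct (Req_dec N 0) as [HN0|HN0].
    - rewrite HN0, Rmult_0_r. destruct (Rle_or_lt S0 0) as [h|h]; auto.
      assert (D + 1 <= D). apply hglb. intros d Hd. specialize (key d Hd). rewrite HN0 in key. lra. lra.
    - assert (S0 / N <= D).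
      { apply hglb. intros d Hd. specialize (key d Hd).
        apply (Rmult_le_reg_r N). lra. unfold Rdiv. rewrite Rmult_assoc, Rinv_l; lra. }
      apply (Rmult_le_compat_r N) in H; [|lra]. unfold Rdiv in H. rewrite Rmult_assoc, Rinv_l in H; lra. }
  split; auto.
  intros A [hA _]. apply hA. unfold khintchine_valid. exact P1.
Qed.
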